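(* Let $m < n$ be positive integers. If the $m \times n$ Domineering board has outcome ${\rm 2nd}$ or $V$, then the $(n-m) \times n$ board does not have outcome $V$.
   Context: Domineering on an $a \times b$ board (a rectangle of $a$ rows and $b$ columns of unit cells): two players, Vera and Hepzibah, alternately place dominoes on empty cells; Vera places vertical dominoes (covering two vertically adjacent empty cells), Hepzibah places horizontal dominoes (covering two horizontally adjacent empty cells). A player who cannot move on her turn loses. The outcome class is $V$ if Vera wins with optimal play regardless of who moves first, $H$ if Hepzibah wins regardless of who moves first, ${\rm 1st}$ if the first player wins, and ${\rm 2nd}$ if the second player wins. *)

(* Defs.v *)
From mathcomp Require Import all_boot.
Set Implicit Arguments. Unset Strict Implicit. Unset Printing Implicit Defensive.

(* A cell is (row, column) : 'I_a * 'I_b.  A position is the set of EMPTY cells.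
   Player [true] = Vera (vertical dominoes), [false] = Hepzibah (horizontal). *)
Section Domineering.
Variables a b : nat.
Definition cell := ('I_a * 'I_b)%type.

Definition domino (p : bool) (x y : cell) : bool :=
  if p then (val x.2 == val y.2) && ((val x.1).+1 == val y.1)
  else (val x.1 == val y.1) && ((val x.2).+1 == val y.2).

(* Fuel k bounds the game length; it is exact once k exceeds the number of
   remaining moves. *)
Fixpoint wins_fuel (k : nat) (p : bool) (S : {set cell}) : bool :=
  if k is k'.+1 then
    [exists x : cell, exists y : cell,
      [&& domino p x y, x \in S, y \in S & ~~ wins_fuel k' (~~ p) (S :\ x :\ y)]]
  else false.

(* each move removes two cells, so #|cell|.+1 moves of fuel is ample *)
Definition wins (p : bool) (S : {set cell}) : bool := wins_fuel #|[set: cell]|.+1 p S.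

Definition vera_first_wins : bool := wins true setT.
Definition hep_first_wins : bool := wins false setT.
End Domineering.

Inductive outcome := OutV | OutH | OutFirst | OutSecond.

Definition outcome_of (a b : nat) : outcome :=
  match vera_first_wins a b, hep_first_wins a b with
  | true, false => OutV
  | false, true => OutH
  | true, true => OutFirst
  | false, false => OutSecond
  end.

(* Main.v *)
Require Import Defs.
From mathcomp Require Import all_boot.
Set Implicit Arguments. Unset Strict Implicit. Unset Printing Implicit Defensive.

Lemma domino_neq a b p (x y : cell a b) : domino p x y -> x != y.
Proof.
case: p => /andP [/eqP h1 /eqP h2]; apply/negP => /eqP E; subst y;
  move: h2; apply/eqP; rewrite gtn_eqF //.
Qed.

Lemma card_rm2 T (S : {set T}) x y : x \in S -> #|S :\ x :\ y| < #|S|.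
Proof.
move=> hx; rewrite (cardsD1 x S) hx add1n ltnS.
by apply: subset_leq_card; apply: subD1set.
Qed.

Lemma fuel_eq a b k k' p (S : {set cell a b}) :
  #|S| < k -> #|S| < k' -> wins_fuel k p S = wins_fuel k' p S.
Proof.
elim: k k' p S => [|k IH] [|k'] p S //= hk hk'.
apply: eq_existsb => x; apply: eq_existsb => y.
case hx: (x \in S); last by rewrite !andbF.
rewrite (IH k') //.
- exact: leq_trans (card_rm2 y hx) hk.
- exact: leq_trans (card_rm2 y hx) hk'.
Qed.

Lemma winsE a b p (S : {set cell a b}) : wins p S =
  [exists x : cell a b, exists y : cell a b,
      [&& domino p x y, x \in S, y \in S & ~~ wins (~~ p) (S :\ x :\ y)]].
Proof.
rewrite /wins /=.
apply: eq_existsb => x; apply: eq_existsb => y.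
case hx: (x \in S); last by rewrite !andbF.
have hS : #|S :\ x :\ y| < #|[set: cell a b]|.
  by apply: leq_trans (card_rm2 y hx) _; rewrite subset_leq_card // subsetT.
by rewrite (@fuel_eq _ _ _ #|[set: cell a b]|.+1) // ltnW.
Qed.

Lemma not_wins_move a b p (S : {set cell a b}) x y : ~~ wins p S ->
  domino p x y -> x \in S -> y \in S -> wins (~~ p) (S :\ x :\ y).
Proof.
rewrite winsE => /existsPn /(_ x) /existsPn /(_ y).
by move=> h hd hx hy; move: h; rewrite hd hx hy /= negbK.
Qed.

Definition sw a b (c : cell a b) : cell b a := (c.2, c.1).
Definition tr a b (S : {set cell a b}) : {set cell b a} := [set c | sw c \in S].

Lemma swK a b (c : cell a b) : sw (sw c) = c.
Proof. by case: c. Qed.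

Lemma mem_tr a b (S : {set cell a b}) c : (sw c \in tr S) = (c \in S).
Proof. by rewrite inE swK. Qed.

Lemma domino_sw a b p (x y : cell a b) : domino (~~ p) (sw x) (sw y) = domino p x y.
Proof. by case: p. Qed.

Lemma tr_rm a b (S : {set cell a b}) x y : tr (S :\ x :\ y) = tr S :\ sw x :\ sw y.
Proof.
apply/setP => c; rewrite !inE.
by rewrite -{1}(swK x) -{1}(swK y) !(can_eq (@swK _ _)).
Qed.

Lemma wins_tr a b k p (S : {set cell a b}) : wins_fuel k p S = wins_fuel k (~~ p) (tr S).
Proof.
elim: k p S => [|k IH] p S //=.
apply/existsP/existsP => [[x /existsP [y /and4P [hd hx hy hw]]] | [x /existsP [y /and4P [hd hx hy hw]]]].
- exists (sw x); apply/existsP; exists (sw y).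
  by rewrite domino_sw !mem_tr hd hx hy -tr_rm -IH.
- exists (sw x); apply/existsP; exists (sw y).
  have hd2 : domino p (sw x) (sw y) by rewrite -(domino_sw p) !swK.
  rewrite inE in hx; rewrite inE in hy.
  by rewrite hd2 hx hy /= IH tr_rm !swK.
Qed.

Lemma tr_setT a b : tr [set: cell a b] = setT.
Proof. by apply/setP => c; rewrite !inE. Qed.

Lemma square_sym n : vera_first_wins n n = hep_first_wins n n.
Proof.
by rewrite /vera_first_wins /hep_first_wins /wins wins_tr tr_setT.
Qed.

Section Sum.
Variables a1 a2 b : nat.
Definition up (c : cell a1 b) : cell (a1 + a2) b := (lshift a2 c.1, c.2).
Definition dn (c : cell a2 b) : cell (a1 + a2) b := (rshift a1 c.1, c.2).
Definition emb (G : {set cell a1 b}) (H : {set cell a2 b}) : {set cell (a1 + a2) b} :=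
  [set c | match split c.1 with inl i => (i, c.2) \in G | inr i => (i, c.2) \in H end].

Lemma up_or_dn (c : cell (a1 + a2) b) : (exists c', c = up c') \/ (exists c', c = dn c').
Proof.
case: c => i j; case: (splitP i) => [i' Hi | i' Hi].
- by left; exists (i', j); congr pair; apply: val_inj.
- by right; exists (i', j); congr pair; apply: val_inj.
Qed.

Lemma split_l (i : 'I_a1) : split (lshift a2 i) = inl i.
Proof. exact: (@unsplitK a1 a2 (inl i)). Qed.
Lemma split_r (i : 'I_a2) : split (rshift a1 i) = inr i.
Proof. exact: (@unsplitK a1 a2 (inr i)). Qed.

Lemma mem_up G H x : (up x \in emb G H) = (x \in G).
Proof. by case: x => i j; rewrite inE /= split_l. Qed.
Lemma mem_dn G H x : (dn x \in emb G H) = (x \in H).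
Proof. by case: x => i j; rewrite inE /= split_r. Qed.

Lemma up_inj : injective up.
Proof. by case=> [i j] [i' j'] [/val_inj -> ->]. Qed.
Lemma dn_inj : injective dn.
Proof. by case=> [i j] [i' j'] [/addnI/val_inj -> ->]. Qed.
Lemma up_dn x y : (up x == dn y) = false.
Proof. by rewrite xpair_eqE eq_lrshift. Qed.
Lemma dn_up x y : (dn x == up y) = false.
Proof. by rewrite xpair_eqE eq_rlshift. Qed.

Lemma emb_rm_up G H x y : emb G H :\ up x :\ up y = emb (G :\ x :\ y) H.
Proof.
apply/setP => c; case: (up_or_dn c) => [[c' ->]|[c' ->]].
- by rewrite !in_setD1 !(inj_eq up_inj) !mem_up !in_setD1.
- by rewrite !in_setD1 !dn_up /= !mem_dn.
Qed.
Lemma emb_rm_dn G H x y : emb G H :\ dn x :\ dn y = emb G (H :\ x :\ y).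
Proof.
apply/setP => c; case: (up_or_dn c) => [[c' ->]|[c' ->]].
- by rewrite !in_setD1 !up_dn /= !mem_up.
- by rewrite !in_setD1 !(inj_eq dn_inj) !mem_dn !in_setD1.
Qed.

Lemma domino_up p x y : domino p (up x) (up y) = domino p x y.
Proof. by case: p. Qed.
Lemma domino_dn p x y : domino p (dn x) (dn y) = domino p x y.
Proof. by case: p => /=; rewrite -?addnS !eqn_add2l. Qed.

Lemma hdomino_cases (x y : cell (a1 + a2) b) : domino false x y ->
  (exists x' y', [/\ x = up x', y = up y' & domino false x' y']) \/
  (exists x' y', [/\ x = dn x', y = dn y' & domino false x' y']).
Proof.
case: (up_or_dn x) => [[x' ->]|[x' ->]]; case: (up_or_dn y) => [[y' ->]|[y' ->]].
- by move=> h; left; exists x', y'; rewrite -domino_up.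
- move=> /andP [/eqP /= h _]; exfalso; move: (ltn_ord x'.1); rewrite h.
  by rewrite ltnNge leq_addr.
- move=> /andP [/eqP /= h _]; exfalso; move: (ltn_ord y'.1); rewrite -h.
  by rewrite ltnNge leq_addr.
- by move=> h; right; exists x', y'; rewrite -domino_dn.
Qed.

Lemma sum_main k : forall (G : {set cell a1 b}) (H : {set cell a2 b}),
  #|emb G H| < k ->
  [/\ (~~ wins false G -> ~~ wins false H -> ~~ wins_fuel k false (emb G H)),
      (wins true G -> ~~ wins false H -> wins_fuel k true (emb G H)) &
      (~~ wins false G -> wins true H -> wins_fuel k true (emb G H))].
Proof.
elim: k => [|k IH] G H //= hk; split.
- move=> hG hH; apply/existsP => [[x /existsP [y /and4P [hd hx hy hw]]]].
  have hc := card_rm2 y hx.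
  case: (hdomino_cases hd) => [[x' [y' [ex ey hd']]]|[x' [y' [ex ey hd']]]];
    subst x y.
  + rewrite emb_rm_up in hw hc.
    rewrite mem_up in hx; rewrite mem_up in hy.
    have [_ h _] := IH _ _ (leq_trans hc hk).
    by rewrite h ?(not_wins_move hG) in hw.
  + rewrite emb_rm_dn in hw hc.
    rewrite mem_dn in hx; rewrite mem_dn in hy.
    have [_ _ h] := IH _ _ (leq_trans hc hk).
    by rewrite h ?(not_wins_move hH) in hw.
- rewrite winsE => /existsP [x /existsP [y /and4P [hd hx hy hw]]] hH.
  apply/existsP; exists (up x); apply/existsP; exists (up y).
have hux : up x \in emb G H by rewrite mem_up.
  have huy : up y \in emb G H by rewrite mem_up.
  have hc := card_rm2 (up y) hux.
  rewrite emb_rm_up in hc.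
  have [h _ _] := IH _ _ (leq_trans hc hk).
  apply/and4P; split => //.
  by rewrite emb_rm_up h.
- move=> hG; rewrite winsE => /existsP [x /existsP [y /and4P [hd hx hy hw]]].
  apply/existsP; exists (dn x); apply/existsP; exists (dn y).
  have hux : dn x \in emb G H by rewrite mem_dn.
  have huy : dn y \in emb G H by rewrite mem_dn.
  have hc := card_rm2 (dn y) hux.
  rewrite emb_rm_dn in hc.
  have [h _ _] := IH _ _ (leq_trans hc hk).
  apply/and4P; split => //.
  - by rewrite -(domino_dn true) in hd.
  - by rewrite emb_rm_dn h.
Qed.
End Sum.

Lemma emb_setT a1 a2 b : emb [set: cell a1 b] [set: cell a2 b] = setT.
Proof.
apply/setP => c; case: (up_or_dn c) => [[c' ->]|[c' ->]].
- by rewrite mem_up !inE.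
- by rewrite mem_dn !inE.
Qed.

Theorem mainTheorem12 (m n : nat) :
  0 < m -> m < n ->
  (outcome_of m n = OutSecond \/ outcome_of m n = OutV) ->
  outcome_of (n - m) n <> OutV.
Proof.
move=> hm hmn hout hV.
have [k En] : exists k, n = m + k by exists (n - m); rewrite subnKC // ltnW.
subst n; rewrite addKn in hV.
have hH1 : hep_first_wins m (m + k) = false.
  by move: hout; rewrite /outcome_of; case: (vera_first_wins m (m + k));
     case: (hep_first_wins m (m + k)); case.
have [hV2 hH2] : vera_first_wins k (m + k) = true /\ hep_first_wins k (m + k) = false.
  by move: hV; rewrite /outcome_of; case: (vera_first_wins k (m + k));
     case: (hep_first_wins k (m + k)).
have hc : #|emb [set: cell m (m + k)] [set: cell k (m + k)]| < #|[set: cell (m + k) (m + k)]|.+1.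
  by rewrite emb_setT.
have [h1 _ h3] := sum_main hc.
have v1 := h3 (negbT hH1) hV2.
have v2 := h1 (negbT hH1) (negbT hH2).
rewrite emb_setT in v1; rewrite emb_setT in v2.
have e := square_sym (m + k).
move: e; rewrite /hep_first_wins /vera_first_wins /wins.
by rewrite v1 (negbTE v2).
Qed.
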